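(* Let $R$ be a commutative noetherian ring, $M$ any $R$-module and $N$ a finitely generated $R$-module. Then $\operatorname{Att}_R(M\otimes_R N)=\operatorname{Att}_R(M)\cap\operatorname{Supp}_R(N)$.
   Context: A prime ideal $\mathfrak{p}$ is attached to an $R$-module $M$ if $\mathfrak{p}=\operatorname{Ann}_R(M/U)$ for some submodule $U\subseteq M$, equivalently $\mathfrak{p}=\operatorname{Ann}_R(M/\mathfrak{p}M)$; $\operatorname{Att}_R(M)$ denotes the set of attached primes. *)

(* Defs.v *)
From HB Require Import structures.
From mathcomp Require Import all_boot all_order all_algebra.
Set Implicit Arguments. Unset Strict Implicit. Unset Printing Implicit Defensive.
Import GRing.Theory.
Local Open Scope ring_scope.

Section Defs.
Variable R : comNzRingType.

Definition is_ideal (I : R -> Prop) : Prop :=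
  [/\ I 0, (forall x y, I x -> I y -> I (x + y)) & (forall r x, I x -> I (r * x))].

Definition is_prime_ideal (P : R -> Prop) : Prop :=
  [/\ is_ideal P, ~ P 1 & (forall x y, P (x * y) -> P x \/ P y)].

Definition noetherian_ring : Prop :=
  forall I : R -> Prop, is_ideal I ->
    exists s : seq R, (forall x, x \in s -> I x) /\
      (forall x, I x -> exists c : nat -> R, x = \sum_(i < size s) c i * s`_i).

Definition is_submodule (M : lmodType R) (U : M -> Prop) : Prop :=
  [/\ U 0, (forall x y, U x -> U y -> U (x + y)) & (forall (r : R) x, U x -> U (r *: x))].

Definition ann_quot (M : lmodType R) (U : M -> Prop) : R -> Prop :=
  fun r => forall m : M, U (r *: m).

Definition attached (M : lmodType R) (p : R -> Prop) : Prop :=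
  is_prime_ideal p /\
  exists U : M -> Prop, is_submodule U /\ (forall r, p r <-> ann_quot U r).

(* p in Supp(N) : p prime and N_p <> 0, i.e. some n/1 <> 0 in N_p,
   i.e. some n is killed by no s outside p. *)
Definition in_support (N : lmodType R) (p : R -> Prop) : Prop :=
  is_prime_ideal p /\ exists n : N, forall s : R, ~ p s -> s *: n <> 0.

Definition finitely_generated (N : lmodType R) : Prop :=
  exists s : seq N, forall n : N,
    exists c : nat -> R, n = \sum_(i < size s) c i *: s`_i.

Definition lin_map (A B : lmodType R) (g : A -> B) : Prop :=
  forall (a : R) x y, g (a *: x + y) = a *: g x + g y.

Definition bilinear_map (A B C : lmodType R) (f : A -> B -> C) : Prop :=
  (forall b, lin_map (fun a => f a b)) /\ (forall a, lin_map (f a)).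

Definition is_tensor_product (M N T : lmodType R) (t : M -> N -> T) : Prop :=
  bilinear_map t /\
  forall (P : lmodType R) (f : M -> N -> P), bilinear_map f ->
    exists g : T -> P, [/\ lin_map g, (forall m n, g (t m n) = f m n) &
      (forall g' : T -> P, lin_map g' -> (forall m n, g' (t m n) = f m n) ->
         forall x, g' x = g x)].

End Defs.

(* Main.v *)
Require Import Defs.
From HB Require Import structures.
From mathcomp Require Import all_boot all_order all_algebra.
From mathcomp Require Import boolp.
From Stdlib Require Import Classical.
Set Implicit Arguments. Unset Strict Implicit. Unset Printing Implicit Defensive.
Import GRing.Theory.
Local Open Scope ring_scope.

Module Q.

Record submod (R : comNzRingType) (V : lmodType R) := Submod
  { sm :> V -> Prop; smP : is_submodule sm }.

Definition coset (R : comNzRingType) (V : lmodType R) (U : submod V) (v : V) : V -> Prop :=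
  fun w => U (w - v).
Definition quot (R : comNzRingType) (V : lmodType R) (U : submod V) :=
  {A : V -> Prop | exists v, A = coset U v}.

HB.instance Definition _ R V U := gen_eqMixin (@quot R V U).
HB.instance Definition _ R V U := gen_choiceMixin (@quot R V U).

Section QS.
Variables (R : comNzRingType) (V : lmodType R) (U : submod V).

Lemma U0 : U 0. Proof. by case: (smP U). Qed.
Lemma UD x y : U x -> U y -> U (x + y). Proof. by case: (smP U) => _ h _; apply: h. Qed.
Lemma UZ r x : U x -> U (r *: x). Proof. by case: (smP U) => _ _ h; apply: h. Qed.
Lemma UN x : U x -> U (- x). Proof. by move=> h; rewrite -scaleN1r; apply: UZ. Qed.
Lemma UB x y : U x -> U y -> U (x - y). Proof. by move=> ? ?; apply: UD => //; apply: UN. Qed.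

Definition pi (v : V) : quot U := exist _ (coset U v) (ex_intro _ v erefl).
Definition repr (q : quot U) : V := projT1 (cid (proj2_sig q)).

Lemma piP v w : pi v = pi w <-> U (v - w).
Proof.
split.
  move=> /(congr1 (@proj1_sig _ _)) /= /(congr1 (fun A => A v)).
  by rewrite /coset subrr => <-; apply: U0.
move=> h; apply: eq_exist; apply: funext => x; apply: propext; rewrite /coset; split => hx.
  by have := UD hx h; rewrite addrA subrK.
by have := UB hx h; rewrite opprB addrA subrK.
Qed.

Lemma reprK q : pi (repr q) = q.
Proof.
rewrite /repr; case: (cid _) => v /= e; case: q e => A hA /= e.
by apply: eq_exist; rewrite e.
Qed.

Lemma pi_repr v : U (repr (pi v) - v).
Proof. by apply/piP; rewrite reprK. Qed.

Definition qadd (a b : quot U) := pi (repr a + repr b).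
Definition qopp (a : quot U) := pi (- repr a).
Definition qzero := pi 0.
Definition qscale (r : R) (a : quot U) := pi (r *: repr a).

Lemma qaddE v w : qadd (pi v) (pi w) = pi (v + w).
Proof.
apply/piP; have h1 := pi_repr v; have h2 := pi_repr w.
have := UD h1 h2; congr (U _); rewrite opprD. 
by rewrite addrACA.
Qed.
Lemma qoppE v : qopp (pi v) = pi (- v).
Proof. apply/piP; have := UN (pi_repr v); congr (U _); by rewrite opprB opprK addrC. Qed.
Lemma qscaleE r v : qscale r (pi v) = pi (r *: v).
Proof. apply/piP; have := UZ r (pi_repr v); congr (U _); by rewrite scalerBr. Qed.

Lemma quot_ind (P : quot U -> Prop) : (forall v, P (pi v)) -> forall q, P q.
Proof. by move=> h q; rewrite -(reprK q). Qed.

Lemma qaddA : associative qadd.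
Proof. by elim/quot_ind=> a; elim/quot_ind=> b; elim/quot_ind=> c; rewrite !qaddE addrA. Qed.
Lemma qaddC : commutative qadd.
Proof. by elim/quot_ind=> a; elim/quot_ind=> b; rewrite !qaddE addrC. Qed.
Lemma qadd0 : left_id qzero qadd.
Proof. by elim/quot_ind=> a; rewrite /qzero qaddE add0r. Qed.
Lemma qaddN : left_inverse qzero qopp qadd.
Proof. by elim/quot_ind=> a; rewrite qoppE qaddE addNr. Qed.

HB.instance Definition _ := GRing.isZmodule.Build (quot U) qaddA qaddC qadd0 qaddN.
Lemma piD v w : pi (v + w) = pi v + pi w. Proof. exact: (esym (qaddE v w)). Qed.

Lemma qscaleA a b v : qscale a (qscale b v) = qscale (a * b) v.
Proof. by elim/quot_ind: v => v; rewrite !qscaleE scalerA. Qed.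
Lemma qscale1 : left_id 1 qscale.
Proof. by elim/quot_ind=> v; rewrite qscaleE scale1r. Qed.
Lemma qscaleDr : right_distributive qscale +%R.
Proof. by move=> a; elim/quot_ind=> v; elim/quot_ind=> w; rewrite -piD !qscaleE scalerDr piD. Qed.
Lemma qscaleDl v : {morph qscale^~ v: a b / a + b}.
Proof. by elim/quot_ind: v => v a b; rewrite !qscaleE scalerDl piD. Qed.

HB.instance Definition _ := GRing.Zmodule_isLmodule.Build R (quot U) qscaleA qscale1 qscaleDr qscaleDl.

Lemma piZ r v : pi (r *: v) = r *: pi v. Proof. exact: (esym (qscaleE r v)). Qed.
Lemma pi0 v : pi v = 0 <-> U v.
Proof. by rewrite -[0]/(pi 0); split => [/piP|h]; [rewrite subr0|apply/piP; rewrite subr0]. Qed.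
End QS.

End Q.
Import Q.

Section Basics.
Variable R : comNzRingType.
Variable p : R -> Prop.
Hypothesis hp : is_prime_ideal p.

Lemma p0 : p 0. Proof. by case: hp => [[]]. Qed.
Lemma pD x y : p x -> p y -> p (x + y). Proof. by case: hp => [[_ h _]] _ _; apply: h. Qed.
Lemma pM r x : p x -> p (r * x). Proof. by case: hp => [[_ _ h]] _ _; apply: h. Qed.
Lemma pMr r x : p x -> p (x * r). Proof. by rewrite mulrC; apply: pM. Qed.
Lemma pN x : p x -> p (- x). Proof. by move=> h; rewrite -mulN1r; apply: pM. Qed.
Lemma pB x y : p x -> p y -> p (x - y). Proof. by move=> ? ?; apply: pD => //; apply: pN. Qed.
Lemma p1 : ~ p 1. Proof. by case: hp. Qed.
Lemma pprime x y : ~ p x -> ~ p y -> ~ p (x * y).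
Proof. by case: hp => _ _ h hx hy /h []. Qed.

Section Mod.
Variable V : lmodType R.

Definition comb (e : nat -> R) (l : seq V) : V := \sum_(i < size l) e i *: l`_i.

Lemma comb_nil e : comb e [::] = 0. Proof. by rewrite /comb big_ord0. Qed.
Lemma comb_cons e g l : comb e (g :: l) = e 0%N *: g + comb (fun i => e i.+1) l.
Proof. by rewrite /comb big_ord_recl. Qed.
Lemma combD e f l : comb (fun i => e i + f i) l = comb e l + comb f l.
Proof. by rewrite /comb -big_split; apply: eq_bigr => i _; rewrite scalerDl. Qed.
Lemma combZ a e l : comb (fun i => a * e i) l = a *: comb e l.
Proof. by rewrite /comb scaler_sumr; apply: eq_bigr => i _; rewrite scalerA. Qed.
Lemma combN e l : comb (fun i => - e i) l = - comb e l.
Proof. by rewrite /comb -sumrN; apply: eq_bigr => i _; rewrite scaleNr. Qed.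
Lemma comb0 l : comb (fun _ => 0) l = 0.
Proof. by rewrite /comb big1 // => i _; rewrite scale0r. Qed.
Lemma combB e f l : comb (fun i => e i - f i) l = comb e l - comb f l.
Proof. by rewrite combD combN. Qed.

Lemma sub0 (S : V -> Prop) : is_submodule S -> S 0. Proof. by case. Qed.
Lemma subD (S : V -> Prop) x y : is_submodule S -> S x -> S y -> S (x + y).
Proof. by case=> _ h _; apply: h. Qed.
Lemma subZ (S : V -> Prop) r x : is_submodule S -> S x -> S (r *: x).
Proof. by case=> _ _ h; apply: h. Qed.
Lemma subN (S : V -> Prop) x : is_submodule S -> S x -> S (- x).
Proof. by move=> hS h; rewrite -scaleN1r; apply: subZ. Qed.
Lemma subB (S : V -> Prop) x y : is_submodule S -> S x -> S y -> S (x - y).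
Proof. by move=> hS ? ?; apply: subD => //; apply: subN. Qed.

Lemma sub_comb (S : V -> Prop) e l : is_submodule S ->
  (forall x, x \in l -> S x) -> S (comb e l).
Proof.
move=> hS; elim: l e => [|g l IH] e hl; first by rewrite comb_nil; apply: sub0.
rewrite comb_cons; apply: subD => //; first by apply: subZ => //; apply: hl; rewrite inE eqxx.
by apply: IH => x hx; apply: hl; rewrite inE hx orbT.
Qed.

Inductive pmul : V -> Prop :=
 | pm0 : pmul 0
 | pmS a x v : p a -> pmul v -> pmul (a *: x + v).

Lemma pmulZp a x : p a -> pmul (a *: x).
Proof. by move=> ha; rewrite -[_ *: _]addr0; apply: pmS => //; apply: pm0. Qed.

Lemma pmul_sub : is_submodule pmul.
Proof.
split; first exact: pm0.
  move=> x y; elim => [|a z v ha hv IH] hy; first by rewrite add0r.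
  by rewrite -addrA; apply: pmS => //; apply: IH.
move=> r x; elim => [|a z v ha hv IH]; first by rewrite scaler0; apply: pm0.
by rewrite scalerDr scalerA; apply: pmS => //; apply: pM.
Qed.

Definition pmulS : submod V := Submod pmul_sub.

Lemma pmul_in (S : V -> Prop) : is_submodule S ->
  (forall a x, p a -> S (a *: x)) -> forall v, pmul v -> S v.
Proof.
move=> hS hax v; elim => [|a x w ha hw IH]; first exact: sub0.
by apply: subD => //; apply: hax.
Qed.

Lemma attached_iff : attached V p <-> (forall r, ann_quot pmul r -> p r).
Proof.
split.
  case=> _ [U [hU hUp]] r hr; apply/(hUp r) => m.
  apply: (pmul_in hU _ (hr m)) => a x ha; exact: (proj1 (hUp a) ha x).
move=> h; split => //; exists pmul; split; first exact: pmul_sub.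
move=> r; split; last exact: h.
by move=> hr m; apply: pmulZp.
Qed.

End Mod.

Lemma lin0 (A B : lmodType R) (g : A -> B) : lin_map g -> g 0 = 0.
Proof. by move=> hg; have := hg (-1) 0 0; rewrite scaler0 addr0 scaleN1r addNr. Qed.
Lemma linZ (A B : lmodType R) (g : A -> B) a x : lin_map g -> g (a *: x) = a *: g x.
Proof. by move=> hg; have := hg a x 0; rewrite !addr0 (lin0 hg) addr0. Qed.
Lemma linD (A B : lmodType R) (g : A -> B) x y : lin_map g -> g (x + y) = g x + g y.
Proof. by move=> hg; have := hg 1 x y; rewrite !scale1r. Qed.

End Basics.

Section Nak.
Variable R : comNzRingType.
Variable p : R -> Prop.
Hypothesis hp : is_prime_ideal p.
Variable N : lmodType R.

Definition pc (l : seq N) y := exists e, (forall j, p (e j)) /\ y = comb e l.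

Lemma pc_sub l : is_submodule (pc l).
Proof.
split.
- by exists (fun _ => 0); split => [j|]; [exact: p0|rewrite comb0].
- move=> x y [e [he ->]] [f [hf ->]]; exists (fun i => e i + f i); split; last by rewrite combD.
  by move=> j; apply: pD.
- move=> r x [e [he ->]]; exists (fun i => r * e i); split; last by rewrite combZ.
  by move=> j; apply: pM.
Qed.

Lemma nak l u : ~ p u -> (forall x, x \in l -> pc l (u *: x)) ->
  exists w, ~ p w /\ forall x, x \in l -> w *: x = 0.
Proof.
elim: l u => [|g l IH] u hu hl.
  by exists 1; split => //; exact: p1.
have [e [he Hg]] := hl g (mem_head _ _).
rewrite comb_cons in Hg.
set v := u - e 0%N.
have hv : ~ p v.
  move=> hv; apply: hu; have -> : u = v + e 0%N by rewrite /v subrK.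
  exact: pD.
have Hvg : v *: g = comb (fun i => e i.+1) l by rewrite /v scalerBl Hg addrAC subrr add0r.
have [w' [hw' Hw']] : exists w, ~ p w /\ forall x, x \in l -> w *: x = 0.
  apply: (IH (v * u)); first exact: pprime.
  move=> x hx; have [f [hf Hx]] := hl x (@mem_behead _ (g :: l) _ hx).
  rewrite comb_cons in Hx.
  rewrite -scalerA Hx scalerDr scalerA mulrC -scalerA Hvg -combZ.
  apply: (subD (pc_sub l)).
    by exists (fun i => f 0%N * e i.+1); split => // j; apply: pM.
  by exists (fun i => v * f i.+1); split => [j|]; [apply: pM | rewrite combZ].
exists (w' * v); split; first exact: pprime.
move=> x; rewrite inE => /orP [/eqP ->|hx].
  rewrite -scalerA Hvg.
  rewrite -combZ.
  have : (fun x : N => w' *: x = 0) (comb (fun i => e i.+1) l).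
    apply: (@sub_comb _ _ (fun x : N => w' *: x = 0)) => //; split => //=; first exact: scaler0.
      by move=> a b ha hb; rewrite scalerDr ha hb addr0.
    by move=> r a ha; rewrite scalerA mulrC -scalerA ha scaler0.
  by rewrite combZ.
by rewrite mulrC -scalerA Hw' // scaler0.
Qed.
End Nak.

Lemma zid (V : zmodType) (A X Y P Q : V) : A - (X + Y) = (P - X) + (Q - Y) - ((P + Q) - A).
Proof. by rewrite addrACA -opprD opprB [RHS]addrC addrA subrK. Qed.

Section Func.
Variable R : comNzRingType.
Variable p : R -> Prop.
Hypothesis hp : is_prime_ideal p.
Variable N : lmodType R.
Variable l : seq N.
Hypothesis hl : forall n : N, exists c, n = comb c l.

Let pmN := pmul_sub hp N.

Lemma pc_of_pmul y : pmul p y -> pc p l y.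
Proof.
move=> hy; apply: (@pmul_in _ p _ _ (pc_sub hp l) _ _ hy).
move=> a x ha.
have [c ->] := hl x.
by exists (fun i => a * c i); split => [j|]; [apply: pMr | rewrite combZ].
Qed.

Lemma nak_N : (exists n : N, forall s, ~ p s -> s *: n <> 0) ->
  ~ (exists d, ~ p d /\ forall x : N, pmul p (d *: x)).
Proof.
move=> [n hn] [d [hd hdx]].
have [w [hw Hw]] := nak hp hd (fun x _ => pc_of_pmul (hdx x)).
apply: (hn w hw); have [c ->] := hl n.
apply: (@sub_comb _ _ (fun x : N => w *: x = 0)) => //; split => //=; first exact: scaler0.
  by move=> a b ha hb; rewrite scalerDr ha hb addr0.
by move=> r a ha; rewrite scalerA mulrC -scalerA ha scaler0.
Qed.

Definition indep (B : seq N) := forall e, pmul p (comb e B) -> forall i, (i < size B)%N -> p (e i).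

Lemma greedy (l' : seq N) : exists d, ~ p d /\ exists B, indep B /\
  forall g, g \in l' -> exists e, pmul p (d *: g - comb e B).
Proof.
elim: l' => [|g l' [d [hd [B [hB HB]]]]].
  by exists 1; split; [exact: p1|exists [::]; split => // i]. 
case: (pselect (indep (g :: B))) => hind.
  exists d; split => //; exists (g :: B); split => //.
  move=> x; rewrite inE => /orP [/eqP ->|hx].
    exists (fun i => if i == 0%N then d else 0); rewrite comb_cons /= comb0 addr0 subrr.
    exact: pm0.
  have [e he] := HB x hx.
  exists (fun i => if i is j.+1 then e j else 0); rewrite comb_cons /= scale0r add0r.
  by [].
have [e [he [i [hi hni]]]] : exists e, pmul p (comb e (g :: B)) /\
    exists i, (i < size (g :: B))%N /\ ~ p (e i).
  apply: NNPP => H; apply: hind => e he i hi; apply: NNPP => hne; apply: H.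
  by exists e; split => //; exists i.
rewrite comb_cons in he.
have he0 : ~ p (e 0%N).
  move=> h0; have h' : pmul p (comb (fun i => e i.+1) B).
    have := subB pmN he (pmulZp g h0); by rewrite addrC addKr.
  move: hni; case: i hi => [|j] hj; first by [].
  by apply; apply: hB h' _ hj.
exists (d * e 0%N); split; first exact: pprime.
exists B; split => //.
move=> x; rewrite inE => /orP [/eqP ->|hx].
  exists (fun i => - (d * e i.+1)); rewrite combN combZ opprK -scalerA -scalerDr.
  exact: subZ pmN he.
have [f hf] := HB x hx.
exists (fun i => e 0%N * f i); rewrite combZ mulrC -scalerA -scalerBr.
exact: subZ pmN hf.
Qed.

Lemma functional : (exists n : N, forall s, ~ p s -> s *: n <> 0) ->
  exists c : N -> R, exists b0, ~ p (c b0) /\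
    forall a x y, p (c (a *: x + y) - (a * c x + c y)).
Proof.
move=> hsupp.
have [d [hd [B [hB HB]]]] := greedy l.
have HS : forall x, exists e, pmul p (d *: x - comb e B).
  pose S x := exists e, pmul p (d *: x - comb e B).
  have hS : is_submodule S.
    split.
    - by exists (fun _ => 0); rewrite comb0 scaler0 subr0; exact: pm0.
    - move=> x y [e he] [f hf]; exists (fun i => e i + f i); rewrite combD scalerDr.
      by rewrite opprD addrACA; apply: subD pmN he hf.
    - move=> r x [e he]; exists (fun i => r * e i); rewrite combZ scalerA mulrC -scalerA -scalerBr.
      exact: subZ pmN he.
  by move=> x; have [c ->] := hl x; apply: sub_comb hS HB.
case: B hB HB HS => [|b0 B'] hB HB HS.
  exfalso; apply: (nak_N hsupp); exists d; split => // x.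
  by have [e] := HS x; rewrite comb_nil subr0.
pose c x := projT1 (cid (HS x)) 0%N.
have cP x : pmul p (d *: x - comb (projT1 (cid (HS x))) (b0 :: B')).
  exact: projT2 (cid (HS x)).
exists c, b0; split.
  move=> hc.
  have h1 := cP b0.
  have h2 : pmul p (comb (fun i => (if i == 0%N then d else 0) - projT1 (cid (HS b0)) i) (b0 :: B')).
    rewrite combB comb_cons /= comb0 addr0; exact: h1.
  have := hB _ h2 0%N isT; rewrite /= => h3.
  apply: hd; have -> : d = (d - c b0) + c b0 by rewrite subrK.
  exact: pD.
move=> a x y.
set ex := projT1 (cid (HS x)); set ey := projT1 (cid (HS y)); set exy := projT1 (cid (HS (a *: x + y))).
have h : pmul p (comb (fun i => exy i - (a * ex i + ey i)) (b0 :: B')).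
  rewrite combB combD combZ.
  rewrite (zid _ _ _ (a *: (d *: x)) (d *: y)).
  have -> : a *: (d *: x) + d *: y = d *: (a *: x + y) by rewrite scalerDr !scalerA mulrC.
  rewrite -scalerBr.
  apply: subB pmN _ (cP _); apply: subD pmN _ (cP _); apply: subZ pmN (cP _).
exact: hB _ h 0%N isT.
Qed.
End Func.

Section Tens.
Variable R : comNzRingType.
Variables (M N T : lmodType R) (t : M -> N -> T).
Hypothesis ht : is_tensor_product t.

Lemma tl1 n : lin_map (fun m => t m n). Proof. by case: ht => [[h _] _]. Qed.
Lemma tl2 m : lin_map (t m). Proof. by case: ht => [[_ h] _]. Qed.

Lemma span_eq (P : lmodType R) (g1 g2 : T -> P) : lin_map g1 -> lin_map g2 ->
  (forall m n, g1 (t m n) = g2 (t m n)) -> forall x, g1 x = g2 x.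
Proof.
move=> h1 h2 h12 x.
have hf : bilinear_map (fun m n => g1 (t m n)).
  split.
    by move=> n a m m'; rewrite /= (tl1 n) h1.
  by move=> m a n n'; rewrite /= (tl2 m) h1.
have [g [hg hgt hu]] := ht.2 P _ hf.
by rewrite (hu g1 h1 (fun _ _ => erefl)) (hu g2 h2).
Qed.
End Tens.

Lemma pmul_lin (R : comNzRingType) (p : R -> Prop) (hp : is_prime_ideal p)
  (A B : lmodType R) (g : A -> B) v : lin_map g -> pmul p v -> pmul p (g v).
Proof.
move=> hg; elim => [|a x w ha hw IH]; first by rewrite (lin0 hg); exact: pm0.
by rewrite hg; apply: pmS.
Qed.

Theorem lemma2p12 (R : comNzRingType) (M N T : lmodType R) (t : M -> N -> T) :
  noetherian_ring R ->
  finitely_generated N ->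
  is_tensor_product t ->
  forall p : R -> Prop, attached T p <-> (attached M p /\ in_support N p).
Proof.
move=> _ [l hl] ht p; split.
  move=> hatt; have hp := hatt.1.
  have hT := (attached_iff hp T).1 hatt.
  split.
    apply/(attached_iff hp) => r hr; apply: hT => x.
    pose P := quot (pmulS hp T).
    have L1 : lin_map (fun x => Q.pi (pmulS hp T) (r *: x)).
      by move=> a y z; rewrite scalerDr scalerA mulrC -scalerA piD piZ.
    have L2 : lin_map (fun _ : T => (0 : P)).
      by move=> a y z; rewrite scaler0 addr0.
    have L3 : forall m n, Q.pi (pmulS hp T) (r *: t m n) = (0 : P).
      move=> m n; apply/pi0 => /=.
      rewrite -(linZ _ _ (tl1 ht n)).
      exact: (pmul_lin hp (tl1 ht n) (hr m)).
    by have := @span_eq R M N T t ht P _ _ L1 L2 L3 x; move/pi0.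
  split => //.
  apply: NNPP => H.
  have Hn : forall n : N, exists s, ~ p s /\ s *: n = 0.
    move=> n; apply: NNPP => H2; apply: H; exists n => s hs hsn.
    by apply: H2; exists s.
  have [w [hw Hw]] : exists w, ~ p w /\ forall x, x \in l -> w *: x = 0.
    elim: (l) => [|g l' [w [hw Hw]]]; first by exists 1; split => //; exact: p1.
    have [s [hs Hs]] := Hn g.
    exists (w * s); split; first exact: pprime.
    move=> x; rewrite inE => /orP [/eqP ->|hx]; first by rewrite -scalerA Hs scaler0.
    by rewrite mulrC -scalerA Hw // scaler0.
  have HwN : forall n : N, w *: n = 0.
    move=> n; have [c ->] := hl n.
    apply: (@sub_comb _ _ (fun x : N => w *: x = 0)) => //; split => //=; first exact: scaler0.
      by move=> a b ha hb; rewrite scalerDr ha hb addr0.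
    by move=> r a ha; rewrite scalerA mulrC -scalerA ha scaler0.
  apply: hw; apply: hT => x.
  have -> : w *: x = 0.
    have := @span_eq R M N T t ht T (fun x => w *: x) (fun _ => 0).
    apply => //.
    - by move=> a y z; rewrite scalerDr scalerA mulrC -scalerA.
    - by move=> a y z; rewrite scaler0 addr0.
    - by move=> m n; rewrite -(linZ _ _ (tl2 ht m)) HwN (lin0 (tl2 ht m)).
  exact: pm0.
move=> [hM hN]; have hp := hM.1.
apply/(attached_iff hp) => r hr; apply: NNPP => hnr.
have [c [b0 [hcb0 hc]]] := functional hp hl hN.2.
have hM' := (attached_iff hp M).1 hM.
apply: (pprime hp hnr hcb0); apply: hM' => m; apply: NNPP => hm.
pose P := quot (pmulS hp M).
pose f := fun (m' : M) (n : N) => Q.pi (pmulS hp M) (c n *: m').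
have hf : bilinear_map f.
  split.
    move=> n a x y; rewrite /f scalerDr scalerA mulrC -scalerA piD piZ //.
  move=> m' a x y; rewrite /f -piZ -piD scalerA -scalerDl.
  apply/(Q.piP (pmulS hp M)); rewrite -scalerBl; apply: pmulZp; exact: hc.
have [g [hg hgt _]] := ht.2 P f hf.
have gp : forall v, pmul p v -> g v = 0.
  move=> v; elim => [|a x w ha hw IH]; first exact: lin0.
  rewrite hg IH addr0.
  elim/quot_ind: (g x) => y.
  by rewrite -piZ; apply/pi0; apply: pmulZp.
apply: hm.
have := gp _ (hr (t m b0)).
rewrite (linZ _ _ hg) hgt /f -piZ scalerA => /pi0.
by [].
Qed.
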